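(* A circuit $c\in\mathsf{ACirc}$ is realisable if and only if its ports can be partitioned into two sets, called inputs and outputs, such that the denotation of the corresponding rewiring of $c$ is the graph $\{(p,f(p)):p\in k(x)^{|I|}\}$ of a rational affine map $f$ from inputs to outputs.
   Context: Fix a field $k$. Circuits: terms built from generators with sorts $(n,m)$ ($n$ left, $m$ right ports): copier $\Delta:(1,2)$, discard $!:(1,0)$, amplifier $\mathsf{s}_r:(1,1)$ ($r\in k$), register $\mathsf{x}:(1,1)$, adder $+:(2,1)$, zero $0:(0,1)$, one $\mathbf{1}:(0,1)$; mirror images $\Delta^{op}:(2,1)$, $!^{op}:(0,1)$, $\mathsf{s}_r^{op}$, $\mathsf{x}^{op}:(1,1)$, $+^{op}:(1,2)$, $0^{op}:(1,0)$, $\mathbf{1}^{op}:(1,0)$; $\mathrm{id}_0$, $\mathrm{id}_1$, $\mathrm{sw}:(2,2)$; closed under sequential composition $;$ and parallel composition $\oplus$; $\mathsf{ACirc}$ is the resulting prop. Denotation: $k(x)$ is the field of polynomial fractions; $[\![\Delta]\!]=\{(p,(p,p))\}$, $[\![!]\!]=\{(p,\bullet)\}$, $[\![+]\!]=\{((p,q),p+q)\}$, $[\![0]\!]=\{(\bullet,0)\}$, $[\![\mathbf 1]\!]=\{(\bullet,1)\}$, $[\![\mathsf s_r]\!]=\{(p,rp)\}$, $[\![\mathsf x]\!]=\{(p,px)\}$; mirrored generators denote converse relations; structural generators denote identity, swap, $\{(\bullet,\bullet)\}$; $;$ is relational composition, $\oplus$ product of relations. Two circuits are equivalent if they have the same denotation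 (equivalently, are equal in the complete equational theory AIH). Feedback: for $c:(n+1,m+1)$, $\mathrm{Tr}(c):(n,m)$ is obtained by connecting the last right port of $c$ to its last left port through a register $\mathsf x$, the wire being bent with the cup $\eta=!^{op};\Delta:(0,2)$ and the cap $\epsilon=\Delta^{op};!:(2,0)$. $\mathsf{ASF}$ (affine signal flow graphs) is the smallest class of circuits containing $\Delta,!,\mathsf s_r,\mathsf x,+,0,\mathbf 1,\mathrm{id}_0,\mathrm{id}_1,\mathrm{sw}$ and closed under $;$, $\oplus$ and $\mathrm{Tr}$. Rewiring: given $c:(n,m)$ and a partition of its $n+m$ ports into inputs $I$ and outputs $O$, the rewiring of $c$ is the circuit of sort $(|I|,|O|)$ obtained by bending left ports in $O$ to the right with cups $\eta$ and right ports in $I$ to the left with caps $\epsilon$ (with symmetries to reorder); its denotation is the set of pairs (values on $I$, values on $O$) which together form an element of $[\![c]\!]$. $c$ is realisable if for some such partition its rewiring is equivalent to a circuit of $\mathsf{ASF}$. $\mathsf{Rat}\subseteq k(x)$ is the ring of fractions $p/q$ with $q$ having nonzero constant term. An affine map $f:k(x)^a\to k(x)^b$, $f(p)=Ap+b_0$, is rational if $A$ and $b_0$ have all entries in $\mathsf{Rat}$. *)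

(* Defs.v *)
From HB Require Import structures.
From mathcomp Require Import all_boot all_order all_algebra.
From mathcomp Require Import fraction.
Set Implicit Arguments. Unset Strict Implicit. Unset Printing Implicit Defensive.
Import Order.TTheory GRing.Theory Num.Theory.
Local Open Scope ring_scope.

(* Circuits of ACirc over a field k: generators, sequential and parallel
   composition, indexed by their sort (n,m) = (#left ports, #right ports). *)
Inductive circ (k : fieldType) : nat -> nat -> Type :=
| Copy : circ k 1 2
| Disc : circ k 1 0
| Amp (r : k) : circ k 1 1
| Reg : circ k 1 1
| Add : circ k 2 1
| Zero : circ k 0 1
| One : circ k 0 1
| CoCopy : circ k 2 1
| CoDisc : circ k 0 1
| CoAmp (r : k) : circ k 1 1
| CoReg : circ k 1 1
| CoAdd : circ k 1 2
| CoZero : circ k 1 0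
| CoOne : circ k 1 0
| Id0 : circ k 0 0
| Id1 : circ k 1 1
| Sw : circ k 2 2
| Seq n m l : circ k n m -> circ k m l -> circ k n l
| Par n1 m1 n2 m2 : circ k n1 m1 -> circ k n2 m2 -> circ k (n1 + n2) (m1 + m2).

Arguments Copy {k}. Arguments Disc {k}. Arguments Reg {k}. Arguments Add {k}.
Arguments Zero {k}. Arguments One {k}. Arguments CoCopy {k}. Arguments CoDisc {k}.
Arguments CoReg {k}. Arguments CoAdd {k}. Arguments CoZero {k}. Arguments CoOne {k}.
Arguments Id0 {k}. Arguments Id1 {k}. Arguments Sw {k}.
Arguments Seq {k n m l}. Arguments Par {k n1 m1 n2 m2}.

Notation kx k := {fraction {poly k}}.
Definition fracp (k : fieldType) (p : {poly k}) : kx k := @FracField.tofrac _ p.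

Section Semantics.
Variable k : fieldType.
Local Notation K := (kx k).

Definition kscal (r : k) : K := fracp (r%:P).
Definition xK : K := fracp 'X.

Definition copyR (a : 'rV[K]_1) (b : 'rV[K]_2) : Prop := b = const_mx (a 0 0).
Definition addR (a : 'rV[K]_2) (b : 'rV[K]_1) : Prop := b = const_mx (\sum_i a 0 i).
Definition zeroR (a : 'rV[K]_0) (b : 'rV[K]_1) : Prop := b = 0.
Definition oneR (a : 'rV[K]_0) (b : 'rV[K]_1) : Prop := b = const_mx 1.
Definition discR (a : 'rV[K]_1) (b : 'rV[K]_0) : Prop := True.
Definition ampR (r : k) (a b : 'rV[K]_1) : Prop := b = kscal r *: a.
Definition regR (a b : 'rV[K]_1) : Prop := b = xK *: a.

Fixpoint sem n m (c : circ k n m) : 'rV[K]_n -> 'rV[K]_m -> Prop :=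
  match c in circ _ n m return 'rV[K]_n -> 'rV[K]_m -> Prop with
  | Copy => copyR
  | Disc => discR
  | Amp r => ampR r
  | Reg => regR
  | Add => addR
  | Zero => zeroR
  | One => oneR
  | CoCopy => fun a b => copyR b a
  | CoDisc => fun a b => discR b a
  | CoAmp r => fun a b => ampR r b a
  | CoReg => fun a b => regR b a
  | CoAdd => fun a b => addR b a
  | CoZero => fun a b => zeroR b a
  | CoOne => fun a b => oneR b a
  | Id0 => fun _ _ => True
  | Id1 => fun a b => a = b
  | Sw => fun a b => b = \row_i a 0 (rev_ord i)
  | Seq _ _ _ c1 c2 => fun a b => exists v, sem c1 a v /\ sem c2 v b
  | Par _ _ _ _ c1 c2 => fun a b =>
      sem c1 (lsubmx a) (lsubmx b) /\ sem c2 (rsubmx a) (rsubmx b)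
  end.

Definition equiv_rel n m (R1 R2 : 'rV[K]_n -> 'rV[K]_m -> Prop) :=
  forall a b, R1 a b <-> R2 a b.

Definition castc n m n' m' (e1 : n = n') (e2 : m = m') (c : circ k n m)
  : circ k n' m' :=
  match e1 in _ = n0, e2 in _ = m0 return circ k n0 m0 with
  | erefl, erefl => c end.

Fixpoint idn (n : nat) : circ k n n :=
  match n with
  | 0 => Id0
  | n'.+1 => castc (addn1 n') (addn1 n') (Par (idn n') Id1)
  end.

Lemma sort_S1 n : (n.+1 + 1 = n + 2)%N.
Proof. by rewrite addn1 addn2. Qed.

Definition cup : circ k 0 2 := Seq CoDisc Copy.
Definition cap : circ k 2 0 := Seq CoCopy Disc.

(* Feedback: the last right port of c is connected to its last left port
   through a register x, bending the wire with cup and cap: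
     Tr(c) = (id_n (+) eta) ; (c (+) id_1) ; (id_m (+) ((x (+) id_1) ; eps)) *)
Definition Tr n m (c : circ k n.+1 m.+1) : circ k n m :=
  Seq (castc (addn0 n) (erefl (n + 2)) (Par (idn n) cup))
   (Seq (castc (sort_S1 n) (sort_S1 m) (Par c Id1))
        (castc (erefl (m + 2)) (addn0 m) (Par (idn m) (Seq (Par Reg Id1) cap)))).

Inductive ASF : forall n m, circ k n m -> Prop :=
| ASF_Copy : ASF Copy
| ASF_Disc : ASF Disc
| ASF_Amp r : ASF (Amp r)
| ASF_Reg : ASF Reg
| ASF_Add : ASF Add
| ASF_Zero : ASF Zero
| ASF_One : ASF One
| ASF_Id0 : ASF Id0
| ASF_Id1 : ASF Id1
| ASF_Sw : ASF Sw
| ASF_Seq n m l (c1 : circ k n m) (c2 : circ k m l) :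
    ASF c1 -> ASF c2 -> ASF (Seq c1 c2)
| ASF_Par n1 m1 n2 m2 (c1 : circ k n1 m1) (c2 : circ k n2 m2) :
    ASF c1 -> ASF c2 -> ASF (Par c1 c2)
| ASF_Tr n m (c : circ k n.+1 m.+1) : ASF c -> ASF (Tr c).

(* A partition is given by the set S of input ports (outputs = ~: S).
   Port values of a pair (a,b) and the vector of values on a set of ports,
   listed in increasing port order (left ports first). *)
Definition port_val n m (a : 'rV[K]_n) (b : 'rV[K]_m) (p : 'I_n + 'I_m) : K :=
  match p with inl i => a 0 i | inr j => b 0 j end.

Definition restrict n m (S : {set 'I_n + 'I_m}) (a : 'rV[K]_n) (b : 'rV[K]_m)
  : 'rV[K]_#|S| := \row_(t < #|S|) port_val a b (enum_val t).

Definition rewiring n m (c : circ k n m) (S : {set 'I_n + 'I_m})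
  (x : 'rV[K]_#|S|) (y : 'rV[K]_#|~: S|) : Prop :=
  exists a b, sem c a b /\ x = restrict S a b /\ y = restrict (~: S) a b.

Arguments rewiring {n m} c S x y.
Arguments restrict {n m} S a b.

Definition realisable n m (c : circ k n m) : Prop :=
  exists (S : {set 'I_n + 'I_m}) (d : circ k #|S| #|~: S|),
    ASF d /\ equiv_rel (sem d) (rewiring c S).

Definition is_Rat (f : K) : Prop :=
  exists p q : {poly k}, q.[0] != 0 /\ f = fracp p / fracp q.

Definition rational_affine a b (f : 'rV[K]_a -> 'rV[K]_b) : Prop :=
  exists (A : 'M[K]_(a, b)) (b0 : 'rV[K]_b),
    (forall i j, is_Rat (A i j)) /\ (forall j, is_Rat (b0 0 j)) /\
    forall p, f p = p *m A + b0.

Definition is_graph_of a b (R : 'rV[K]_a -> 'rV[K]_b -> Prop)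
  (f : 'rV[K]_a -> 'rV[K]_b) : Prop :=
  forall p q, R p q <-> q = f p.

End Semantics.

Arguments rewiring {k n m} c S x y.
Arguments restrict {k n m} S a b.
Arguments rational_affine {k a b} f.
Arguments is_graph_of {k a b} R f.
Arguments realisable {k n m} c.

(* Main.v *)
Require Import Defs.
From mathcomp Require Import all_boot all_order all_algebra.
From mathcomp Require Import fraction.
From mathcomp Require Import ring zify.

Module AlgM.
Import GRing.Theory.
Local Open Scope ring_scope.
Lemma fD (F : fieldType) (a b c d : F) : b != 0 -> d != 0 -> a / b + c / d = (a * d + c * b) / (b * d).
Proof. by move=> hb hd; field; rewrite hb hd. Qed.
Lemma fM (F : fieldType) (a b c d : F) : b != 0 -> d != 0 -> a / b * (c / d) = (a * c) / (b * d).
Proof. by move=> hb hd; field; rewrite hb hd. Qed.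
Lemma fB1 (F : fieldType) (x p q : F) : q != 0 -> 1 - x * (p / q) = (q - x * p) / q.
Proof. by move=> hq; field. Qed.
Lemma fdiv (F : fieldType) (x r q : F) : q != 0 -> r != 0 -> x / (r / q) = (x * q) / r.
Proof. by move=> hq hr; field; rewrite hq hr. Qed.
Lemma tr_alg (F : fieldType) (x t w Pm am bm : F) : 1 - x * am != 0 ->
  t = x * w -> w = Pm + t * am + bm -> t = x / (1 - x * am) * (Pm + bm).
Proof. move=> hd ht hw.
have h : t * (1 - x * am) = x * (Pm + bm).
  by rewrite mulrBr mulr1 {1}ht hw; ring.
apply: (mulIf hd); rewrite h; field; exact: hd. Qed.
Lemma tr_alg2 (F : comRingType) (e Pj Pm aj bj bm : F) :
  Pj + e * (Pm + bm) * aj + bj = Pj + e * aj * Pm + (bj + e * bm * aj).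
Proof. ring. Qed.
Lemma tr_alg3 (F : fieldType) (x Pm am bm : F) : 1 - x * am != 0 ->
  (Pm + bm) / (1 - x * am) = Pm + x * ((Pm + bm) / (1 - x * am)) * am + bm.
Proof. move=> hd; field; exact: hd. Qed.
Lemma tr_alg4 (F : comRingType) (p a e b c : F) : p * (a + e * b * c) = p * a + e * c * (p * b).
Proof. ring. Qed.
Lemma tr_alg5 (F : comRingType) (x di Pj Pm aj bj bm : F) :
  Pj + x * di * aj * Pm + (bj + x * di * bm * aj) = Pj + x * ((Pm + bm) * di) * aj + bj.
Proof. ring. Qed.
Lemma poly_alg (F : comRingType) (x P C a : F) : x * (P * a) + C * a = (P * x + C) * a.
Proof. ring. Qed.
Lemma inv_alg1 (F : fieldType) (Ci C A0 y x Q : F) : Ci * C = 1 -> Q * x + C != 0 ->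
  y = Ci * A0 + (- Ci) * (x * (Q * y)) -> y = (Q * x + C)^-1 * A0.
Proof.
move=> hc hq hy.
have hc' : C * Ci = 1 by rewrite mulrC.
have e : C * y = A0 - x * (Q * y).
  transitivity (C * Ci * A0 - C * Ci * (x * (Q * y))).
    by rewrite {1}hy; ring.
  by rewrite hc'; ring.
have h : y * (Q * x + C) = A0.
  transitivity (x * (Q * y) + C * y); first by ring.
  by rewrite e; ring.
by rewrite -h; field; exact: hq.
Qed.
Lemma inv_alg2 (F : fieldType) (Ci C A0 x Q : F) : Ci * C = 1 -> Q * x + C != 0 ->
  (Q * x + C)^-1 * A0 = Ci * A0 + (- Ci) * (x * (Q * ((Q * x + C)^-1 * A0))).
Proof.
move=> hc hq.
have hC : C != 0 by apply/eqP => h0; move: hc; rewrite h0 mulr0 => /eqP; rewrite eq_sym oner_eq0.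
have -> : Ci = C^-1 by rewrite -[Ci]mulr1 -(mulfV hC) mulrA hc mul1r.
by field; rewrite hq hC.
Qed.
Lemma col_alg (F : comRingType) (S S' b g x : F) : S = S' -> (S + b) + g * x = (S' + x * g) + b.
Proof. by move=> ->; ring. Qed.
End AlgM.
Import AlgM.

Set Implicit Arguments. Unset Strict Implicit. Unset Printing Implicit Defensive.
Import Order.TTheory GRing.Theory Num.Theory.
Local Open Scope ring_scope.

Module BaseM.

Section Dev.
Variable k : fieldType.
Local Notation K := (kx k).

Definition rget N (r : 'rV[K]_N) (i : nat) : K :=
  if (insub i : option 'I_N) is Some j then r 0 j else 0.

Definition mkrow N (f : nat -> K) : 'rV[K]_N := \row_(i < N) f i.

Lemma rgetE N (r : 'rV[K]_N) (i : 'I_N) : rget r i = r 0 i.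
Proof. by rewrite /rget valK. Qed.

Lemma rget_ge N (r : 'rV[K]_N) i : (N <= i)%N -> rget r i = 0.
Proof. by move=> h; rewrite /rget insubF // ltnNge h. Qed.

Lemma rowE N (r s : 'rV[K]_N) : (forall i, (i < N)%N -> rget r i = rget s i) -> r = s.
Proof. by move=> h; apply/rowP => j; rewrite -!rgetE h. Qed.

Lemma rget_mkrow N f i : rget (mkrow N f) i = if (i < N)%N then f i else 0.
Proof.
case: ltnP => h; last by rewrite rget_ge.
by rewrite -[i]/(val (Ordinal h)) rgetE mxE.
Qed.

Lemma rget_cast N N' (e : (1 = 1)%N * (N = N')) (r : 'rV[K]_N) i :
  rget (castmx e r) i = rget r i.
Proof.
case: e => e1 e2; case: N' / e2; rewrite (eq_irrelevance e1 erefl).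
by rewrite castmx_id.
Qed.

Lemma rget_lsub n1 n2 (r : 'rV[K]_(n1 + n2)) i : (i < n1)%N -> rget (lsubmx r) i = rget r i.
Proof.
move=> h; rewrite -[i]/(val (Ordinal h)) rgetE mxE.
by rewrite -rgetE.
Qed.

Lemma rget_rsub n1 n2 (r : 'rV[K]_(n1 + n2)) i : rget (rsubmx r) i = rget r (n1 + i).
Proof.
case: (ltnP i n2) => h; last by rewrite !rget_ge // leq_add2l.
by rewrite -[i]/(val (Ordinal h)) rgetE mxE -rgetE.
Qed.

Lemma rget_row_mx n1 n2 (u : 'rV[K]_n1) (v : 'rV[K]_n2) i :
  rget (row_mx u v) i = if (i < n1)%N then rget u i else rget v (i - n1).
Proof.
case: ifP => h.
  by rewrite -(rget_lsub (row_mx u v) h) row_mxKl.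
have h' : (n1 <= i)%N by rewrite leqNgt h.
by rewrite -{1}(subnKC h') -rget_rsub row_mxKr.
Qed.

Lemma rget_add N (u v : 'rV[K]_N) i : rget (u + v) i = rget u i + rget v i.
Proof.
case: (ltnP i N) => h; last by rewrite !rget_ge // addr0.
by rewrite -[i]/(val (Ordinal h)) !rgetE mxE.
Qed.

Lemma rget_scale N c (u : 'rV[K]_N) i : rget (c *: u) i = c * rget u i.
Proof.
case: (ltnP i N) => h; last by rewrite !rget_ge // mulr0.
by rewrite -[i]/(val (Ordinal h)) !rgetE mxE.
Qed.

Lemma rget_const N c i : rget (const_mx c : 'rV[K]_N) i = if (i < N)%N then c else 0.
Proof.
case: ltnP => h; last by rewrite rget_ge.
by rewrite -[i]/(val (Ordinal h)) rgetE mxE.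
Qed.

Lemma rget0 N i : rget (0 : 'rV[K]_N) i = 0.
Proof.
case: (ltnP i N) => h; last by rewrite !rget_ge.
by rewrite -[i]/(val (Ordinal h)) !rgetE mxE.
Qed.

Lemma rget_sw (a : 'rV[K]_2) i :
  rget (\row_(j < 2) a 0 (rev_ord j)) i = if (i < 2)%N then rget a (1 - i) else 0.
Proof.
case: ltnP => h; last by rewrite rget_ge.
by rewrite -[i]/(val (Ordinal h)) rgetE mxE -rgetE /=.
Qed.

Lemma rV0_eq (u v : 'rV[K]_0) : u = v.
Proof. by rewrite (thinmx0 u) (thinmx0 v). Qed.

Lemma rget1 (u : 'rV[K]_1) : u 0 0 = rget u 0.
Proof. by rewrite -(rgetE u ord0). Qed.


Definition GF n m (c : circ k n m) (f : 'rV[K]_n -> 'rV[K]_m) :=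
  forall a b, sem c a b <-> b = f a.

Lemma sem_castc n m n' m' (e1 : n = n') (e2 : m = m') (c : circ k n m) a b :
  sem (castc e1 e2 c) a b <->
  sem c (castmx (erefl 1%N, esym e1) a) (castmx (erefl 1%N, esym e2) b).
Proof.
move: a b; case: n' / e1; case: m' / e2 => a b /=.
by rewrite !castmx_id.
Qed.

Lemma GF_ext n m (c : circ k n m) f g : GF c f -> (forall a, f a = g a) -> GF c g.
Proof. by move=> h e a b; rewrite h e. Qed.

Lemma GF_Seq n m l (c1 : circ k n m) (c2 : circ k m l) f1 f2 :
  GF c1 f1 -> GF c2 f2 -> GF (Seq c1 c2) (fun a => f2 (f1 a)).
Proof.
move=> h1 h2 a b /=; split.
  by case=> v [/h1 -> /h2 ->].
by move=> ->; exists (f1 a); rewrite h1 h2.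
Qed.

Lemma GF_Par n1 m1 n2 m2 (c1 : circ k n1 m1) (c2 : circ k n2 m2) f1 f2 :
  GF c1 f1 -> GF c2 f2 ->
  GF (Par c1 c2) (fun a => row_mx (f1 (lsubmx a)) (f2 (rsubmx a))).
Proof.
move=> h1 h2 a b /=; rewrite h1 h2; split.
  by case=> e1 e2; rewrite -[b]hsubmxK e1 e2.
by move=> ->; rewrite row_mxKl row_mxKr.
Qed.

Lemma GF_cast n m n' m' (e1 : n = n') (e2 : m = m') (c : circ k n m) f :
  GF c f -> GF (castc e1 e2 c)
     (fun a => castmx (erefl 1%N, e2) (f (castmx (erefl 1%N, esym e1) a))).
Proof.
move=> h; case: n' / e1; case: m' / e2 => a b /=.
by rewrite h !castmx_id.
Qed.

Lemma GF_idn n : GF (idn k n) id.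
Proof.
elim: n => [|n IH] a b /=.
  by split => // _; apply: rV0_eq.
rewrite sem_castc /= !IH; split.
  move=> [e1 e2].
  have : castmx (erefl 1%N, esym (addn1 n)) b = castmx (erefl 1%N, esym (addn1 n)) a.
    by rewrite -[castmx _ b]hsubmxK -[castmx _ a]hsubmxK e1 e2.
  by move/(congr1 (castmx (erefl 1%N, addn1 n))); rewrite !castmxKV.
by move=> ->.
Qed.

Definition ext n (p : 'rV[K]_n) (t : K) : 'rV[K]_n.+1 :=
  mkrow n.+1 (fun i => if (i < n)%N then rget p i else t).

Lemma addRN (a b : nat) : (a + b)%R = (a + b)%N. Proof. by []. Qed.
Lemma cmxE N c (i : 'I_1) (j : 'I_N) : (const_mx c : 'rV[K]_N) i j = c.
Proof. by rewrite mxE. Qed.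

Lemma two_nat : (2%R : nat) = 2%N. Proof. by []. Qed.
Ltac sif := rewrite ?addRN ?two_nat; repeat (case: ifP => ?); try (by exfalso; lia); try done.

Ltac rg := rewrite ?(rget_cast, rget_rsub, rget_mkrow, rget_row_mx, rget_add,
   rget_scale, rget_const, rget0, rget_sw, cmxE).

Lemma sem_Tr n m (c : circ k n.+1 m.+1) p q :
  sem (Tr c) p q <-> exists t w, sem c (ext p t) (ext q w) /\ t = xK k * w.
Proof.
rewrite /Tr; split.
  move=> [a1 [/sem_castc H1 [a2 [/sem_castc H2 /sem_castc H3]]]].
  move: H1 H2 H3 => /= [/GF_idn H1 [v [_ H2]]] [H3 H4] [/GF_idn H5 [z [[H6 H7] [y [H8 _]]]]].
  exists (rget a1 n), (rget a2 m); split.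
    have -> : ext p (rget a1 n) = lsubmx (castmx (erefl 1%N, esym (sort_S1 n)) a1).
      apply: rowE => i hi; rewrite rget_lsub // rget_cast /ext rget_mkrow hi.
      case: ifP => hin; last by have -> : i = n by lia.
      move: (congr1 (fun r => rget r i) H1) => /=; rewrite !rget_lsub // !rget_cast => ->. 
      by [].
    have -> : ext q (rget a2 m) = lsubmx (castmx (erefl 1%N, esym (sort_S1 m)) a2).
      apply: rowE => i hi; rewrite rget_lsub // rget_cast /ext rget_mkrow hi.
      case: ifP => hin; last by have -> : i = m by lia.
      move: (congr1 (fun r => rget r i) H5) => /=; rewrite !rget_lsub // !rget_cast => ->. 
      by [].
    exact: H3.
  move: (congr1 (fun r => rget r 0) H2) (congr1 (fun r => rget r 1) H2) => /=; rg => /= E0 E1; rewrite addn0 in E0.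
  move: (congr1 (fun r => rget r 0) H4) => /=; rg; rewrite !addn0 => E2.
  move: (congr1 (fun r => rget r 0) H8) (congr1 (fun r => rget r 1) H8) => /=; rg => /= E3 E3'.
  move: (congr1 (fun r => rget r 0) H6) => /=; rg; rewrite (@rget_lsub 1 1) // (@rget_lsub 1 1) //; rg; rewrite addn0 => E4.
  move: (congr1 (fun r => rget r 0) H7) => /=; rg; rewrite !addn0 => E5.
  by rewrite E0 -E1 addn1 E2 -[m.+1]addn1 E5 E3' -E3 E4.
move=> [t [w [Hc ht]]].
exists (mkrow (n + 2) (fun i => if (i < n)%N then rget p i else t)); split.
  apply/sem_castc => /=; split.
    apply/GF_idn; apply: rowE => i hi; rewrite !rget_lsub //; rg; sif.
  by exists (@const_mx _ 1 1 t); split => //; rewrite /copyR; apply: rowE => i hi; rg; sif.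
exists (mkrow (m + 2) (fun i => if (i < m)%N then rget q i else if i == m then w else t)); split.
  apply/sem_castc => /=; split.
    set A1 := lsubmx _; set A2 := lsubmx _.
    suff [-> ->] : A1 = ext p t /\ A2 = ext q w by [].
    by split; apply: rowE => i hi; rewrite /A1 /A2 /ext !rget_lsub //; rg; sif.
  by apply: rowE => i hi; rg; sif.
apply/sem_castc => /=; split.
  by apply/GF_idn; apply: rowE => i hi; rewrite !rget_lsub //; rg; sif.
exists (@const_mx _ 1 2 t); split; [split|].
    rewrite /regR; apply: rowE => i hi; rewrite (@rget_lsub 1 1) //; rg.
    rewrite (@rget_lsub 1 1) //; rg; sif.
  by apply: rowE => i hi; rg; sif.
by exists (@const_mx _ 1 1 t); split => //; rewrite /copyR; apply: rowE => i hi; rg; sif.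
Qed.


End Dev.
End BaseM.
Import BaseM.

Module RM.

Section Rat.
Variable k : fieldType.
Local Notation K := (kx k).

Lemma fracp_neq0 (q : {poly k}) : q.[0] != 0 -> fracp q != 0.
Proof.
move=> h; rewrite /fracp tofrac_eq0; apply: contra h => /eqP ->.
by rewrite horner0.
Qed.

Lemma Rat_fracp (p : {poly k}) : is_Rat (fracp p).
Proof.
exists p, 1; split; first by rewrite hornerC oner_neq0.
by rewrite /fracp tofrac1 divr1.
Qed.

Lemma Rat0 : is_Rat (0 : K).
Proof. by have := Rat_fracp 0; rewrite /fracp tofrac0. Qed.

Lemma Rat1 : is_Rat (1 : K).
Proof. by have := Rat_fracp 1; rewrite /fracp tofrac1. Qed.

Lemma RatD (a b : K) : is_Rat a -> is_Rat b -> is_Rat (a + b).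
Proof.
move=> [p1 [q1 [h1 ->]]] [p2 [q2 [h2 ->]]].
exists (p1 * q2 + p2 * q1), (q1 * q2); split.
  by rewrite hornerM mulf_neq0.
have n1 := fracp_neq0 h1; have n2 := fracp_neq0 h2.
by rewrite (fD _ _ _ _ _ n1 n2) /fracp tofracD !tofracM.
Qed.

Lemma RatM (a b : K) : is_Rat a -> is_Rat b -> is_Rat (a * b).
Proof.
move=> [p1 [q1 [h1 ->]]] [p2 [q2 [h2 ->]]].
exists (p1 * p2), (q1 * q2); split.
  by rewrite hornerM mulf_neq0.
have n1 := fracp_neq0 h1; have n2 := fracp_neq0 h2.
by rewrite (fM _ _ _ _ _ n1 n2) /fracp !tofracM.
Qed.

Lemma RatN (a : K) : is_Rat a -> is_Rat (- a).
Proof.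
move=> [p1 [q1 [h1 ->]]]; exists (- p1), q1; split => //.
by rewrite /fracp tofracN mulNr.
Qed.

Lemma Rat_sum N (F : 'I_N -> K) : (forall i, is_Rat (F i)) -> is_Rat (\sum_(i < N) F i).
Proof. by move=> h; apply: big_ind => //; [exact: Rat0 | exact: RatD]. Qed.

Lemma Rat_kscal (r : k) : is_Rat (kscal r). Proof. exact: Rat_fracp. Qed.
Lemma Rat_xK : is_Rat (xK k). Proof. exact: Rat_fracp. Qed.

Lemma Rat_fb (a : K) : is_Rat a -> 1 - xK k * a != 0 /\ is_Rat (xK k / (1 - xK k * a)).
Proof.
move=> [p [q [h ->]]].
have hr : (q - 'X * p).[0] != 0.
  by rewrite hornerD hornerN hornerM hornerX mul0r subr0.
have nq := fracp_neq0 h; have nr := fracp_neq0 hr.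
have E : 1 - xK k * (fracp p / fracp q) = fracp (q - 'X * p) / fracp q.
  by rewrite (fB1 _ (xK k) (fracp p) (fracp q) nq) /xK /fracp tofracB tofracM.
rewrite E; split; first exact: (mulf_neq0 nr (invr_neq0 nq)).
exists ('X * q), (q - 'X * p); split; first exact: hr.
by rewrite (fdiv _ (xK k) _ _ nq nr) /xK /fracp tofracM.
Qed.

End Rat.
End RM.
Import RM.

Module SM.

Section Sound.
Variable k : fieldType.
Local Notation K := (kx k).

Definition RatA a b (A : 'M[K]_(a, b)) := forall i j, is_Rat (A i j).
Definition RatV b (v : 'rV[K]_b) := forall j, is_Rat (v 0 j).

Definition AffG n m (c : circ k n m) :=
  exists (A : 'M[K]_(n, m)) (b0 : 'rV[K]_m), RatA A /\ RatV b0 /\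
     GF c (fun p => p *m A + b0).

Lemma Rat_scalar a (c : K) (i j : 'I_a) : is_Rat c -> is_Rat ((c%:M : 'M_a) i j).
Proof. by move=> h; rewrite mxE; case: eqP => _; [exact: h | exact: Rat0]. Qed.

Lemma Rat_mul a b l (A : 'M[K]_(a, b)) (B : 'M[K]_(b, l)) : RatA A -> RatA B -> RatA (A *m B).
Proof. by move=> hA hB i j; rewrite mxE; apply: Rat_sum => t; apply: RatM. Qed.

Lemma Rat_mulv a b (v : 'rV[K]_a) (B : 'M[K]_(a, b)) : RatV v -> RatA B -> RatV (v *m B).
Proof. by move=> hA hB j; rewrite mxE; apply: Rat_sum => t; apply: RatM. Qed.

Lemma RatV_add b (u v : 'rV[K]_b) : RatV u -> RatV v -> RatV (u + v).
Proof. by move=> hu hv j; rewrite mxE; apply: RatD. Qed.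

Lemma RatA0 a b : RatA (0 : 'M[K]_(a, b)).
Proof. by move=> i j; rewrite mxE; exact: Rat0. Qed.
Lemma RatV0 b : RatV (0 : 'rV[K]_b).
Proof. by move=> j; rewrite mxE; exact: Rat0. Qed.
Lemma RatA1 a b : RatA (const_mx 1 : 'M[K]_(a, b)).
Proof. by move=> i j; rewrite mxE; exact: Rat1. Qed.

Lemma aff_gen n m (c : circ k n m) f A b0 : RatA A -> RatV b0 ->
  (forall a b, sem c a b <-> b = f a) -> (forall a, f a = a *m A + b0) -> AffG c.
Proof. move=> hA hb hc e; exists A, b0; split; first exact: hA; split; first exact: hb. exact: GF_ext hc e. Qed.

Lemma sound_Seq n m l (c1 : circ k n m) (c2 : circ k m l) :
  AffG c1 -> AffG c2 -> AffG (Seq c1 c2).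
Proof.
move=> [A1 [b1 [hA1 [hb1 h1]]]] [A2 [b2 [hA2 [hb2 h2]]]].
apply: (aff_gen (A := A1 *m A2) (b0 := b1 *m A2 + b2)) (GF_Seq h1 h2) _.
- exact: Rat_mul.
- by apply: RatV_add => //; apply: Rat_mulv.
by move=> a; rewrite mulmxDl mulmxA addrA.
Qed.

Lemma sound_Par n1 m1 n2 m2 (c1 : circ k n1 m1) (c2 : circ k n2 m2) :
  AffG c1 -> AffG c2 -> AffG (Par c1 c2).
Proof.
move=> [A1 [b1 [hA1 [hb1 h1]]]] [A2 [b2 [hA2 [hb2 h2]]]].
apply: (aff_gen (A := block_mx A1 0 0 A2) (b0 := row_mx b1 b2)) (GF_Par h1 h2) _.
- move=> i j.
  case: (split_ordP i) => i' ->; case: (split_ordP j) => j' ->;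
   rewrite ?block_mxEul ?block_mxEur ?block_mxEdl ?block_mxEdr ?mxE;
   by [apply: hA1 | apply: hA2 | apply: Rat0].
- move=> j; case: (split_ordP j) => j' ->; rewrite ?row_mxEl ?row_mxEr; by [apply: hb1|apply: hb2].
move=> a; rewrite -{3}[a]hsubmxK mul_row_block !mulmx0 addr0 add0r add_row_mx.
by [].
Qed.


Lemma sound_Copy : AffG (@Copy k).
Proof.
apply: (aff_gen (A := const_mx 1 : 'M_(1,2)) (b0 := 0) (f := fun a => const_mx (a 0 0))).
+ exact: RatA1.
+ exact: RatV0.
+ by move=> a b; exact: iff_refl.
by move=> a; apply/rowP => j; rewrite !mxE big_ord1 !mxE mulr1 addr0.
Qed.

Lemma sound_Disc : AffG (@Disc k).
Proof.
apply: (aff_gen (A := 0 : 'M_(1,0)) (b0 := 0) (f := fun a => 0)).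
+ exact: RatA0.
+ exact: RatV0.
+ by move=> a b; split => _; [apply: rV0_eq|].
by move=> a; apply: rV0_eq.
Qed.

Lemma sound_Reg : AffG (@Reg k).
Proof.
apply: (aff_gen (A := (xK k)%:M : 'M_1) (b0 := 0) (f := fun a => xK k *: a)).
+ by move=> i j; apply: Rat_scalar; apply: Rat_xK.
+ exact: RatV0.
+ by move=> a b; exact: iff_refl.
by move=> a; rewrite mul_mx_scalar addr0.
Qed.

Lemma sound_Add : AffG (@Add k).
Proof.
apply: (aff_gen (A := const_mx 1 : 'M_(2,1)) (b0 := 0) (f := fun a => const_mx (\sum_i a 0 i))).
+ exact: RatA1.
+ exact: RatV0.
+ by move=> a b; exact: iff_refl.
move=> a; apply/rowP => j; rewrite !mxE addr0; apply: eq_bigr => i _.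
by rewrite mxE mulr1.
Qed.

Lemma sound_Zero : AffG (@Zero k).
Proof.
apply: (aff_gen (A := 0 : 'M_(0,1)) (b0 := 0) (f := fun a => 0)).
+ exact: RatA0.
+ exact: RatV0.
+ by move=> a b; exact: iff_refl.
by move=> a; rewrite mulmx0 addr0.
Qed.

Lemma sound_One : AffG (@One k).
Proof.
apply: (aff_gen (A := 0 : 'M_(0,1)) (b0 := const_mx 1) (f := fun a => const_mx 1)).
+ exact: RatA0.
+ by move=> j; rewrite mxE; exact: Rat1.
+ by move=> a b; exact: iff_refl.
by move=> a; rewrite mulmx0 add0r.
Qed.

Lemma sound_Id0 : AffG (@Id0 k).
Proof.
apply: (aff_gen (A := 0 : 'M_(0,0)) (b0 := 0) (f := fun a => 0)).
+ exact: RatA0.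
+ exact: RatV0.
+ by move=> a b; split => _; [apply: rV0_eq|].
by move=> a; apply: rV0_eq.
Qed.

Lemma sound_Id1 : AffG (@Id1 k).
Proof.
apply: (aff_gen (A := 1%:M : 'M_1) (b0 := 0) (f := fun a => a)).
+ by move=> i j; apply: Rat_scalar; apply: Rat1.
+ exact: RatV0.
+ by move=> a b; split => ->.
by move=> a; rewrite mulmx1 addr0.
Qed.

Lemma sound_Amp r : AffG (@Amp k r).
Proof.
apply: (aff_gen (A := (kscal r)%:M : 'M_1) (b0 := 0) (f := fun a => kscal r *: a)).
+ by move=> i j; apply: Rat_scalar; apply: Rat_kscal.
+ exact: RatV0.
+ by move=> a b; exact: iff_refl.
by move=> a; rewrite mul_mx_scalar addr0.
Qed.

Lemma sound_Sw : AffG (@Sw k).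
Proof.
apply: (aff_gen (A := \matrix_(i < 2, j < 2) (if i == rev_ord j then 1 else 0) : 'M[K]_2)
  (b0 := 0) (f := fun a => \row_i a 0 (rev_ord i))).
+ by move=> i j; rewrite mxE; case: eqP => _; [exact: Rat1|exact: Rat0].
+ exact: RatV0.
+ by move=> a b; exact: iff_refl.
move=> a; apply/rowP => j; rewrite !mxE (bigD1 (rev_ord j) isT) /= mxE eqxx mulr1.
rewrite big1 ?addr0 ?addr0 //.
by move=> i /= hi; rewrite mxE (negbTE hi) mulr0.
Qed.


Lemma ext_w n (p : 'rV[K]_n) t (i : 'I_n) : ext p t 0 (widen_ord (leqnSn n) i) = p 0 i.
Proof.
have h1 : (i < n.+1)%N by rewrite ltnS ltnW.
by rewrite -rgetE /ext rget_mkrow /= h1 (ltn_ord i) rgetE.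
Qed.

Lemma ext_max n (p : 'rV[K]_n) t : ext p t 0 ord_max = t.
Proof. by rewrite -rgetE /ext rget_mkrow /= ltnSn ltnn. Qed.

Lemma extmul n m (p : 'rV[K]_n) t (A : 'M[K]_(n.+1, m)) (b0 : 'rV[K]_m) j :
  (ext p t *m A + b0) 0 j =
  \sum_(i < n) p 0 i * A (widen_ord (leqnSn n) i) j + t * A ord_max j + b0 0 j.
Proof.
rewrite mxE [(_ *m _) 0 j]mxE big_ord_recr /= ext_max.
congr (_ + _ * _ + _); apply: eq_bigr => i _; rewrite ext_w.
by [].
Qed.

Lemma lift_max' m (j : 'I_m) : lift ord_max j = widen_ord (leqnSn m) j.
Proof. apply: val_inj; exact: lift_max. Qed.

Lemma sound_Tr n m (c : circ k n.+1 m.+1) : AffG c -> AffG (Tr c).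
Proof.
move=> [A [b0 [hA [hb hc]]]].
have [hd he] := Rat_fb (hA ord_max ord_max).
set d := 1 - xK k * A ord_max ord_max in hd he.
set e := xK k / d in he.
exists (\matrix_(i < n, j < m) (A (widen_ord (leqnSn n) i) (widen_ord (leqnSn m) j)
   + e * A (widen_ord (leqnSn n) i) ord_max * A ord_max (widen_ord (leqnSn m) j))).
exists (\row_(j < m) (b0 0 (widen_ord (leqnSn m) j)
   + e * b0 0 ord_max * A ord_max (widen_ord (leqnSn m) j))).
split.
  move=> i j; rewrite mxE; apply: RatD; first exact: hA.
  by apply: RatM; [apply: RatM; [exact: he | exact: hA] | exact: hA].
split.
  move=> j; rewrite mxE; apply: RatD; first exact: hb.
  by apply: RatM; [apply: RatM; [exact: he | exact: hb] | exact: hA].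
move=> p q; rewrite sem_Tr.
set Pm := \sum_(i < n) p 0 i * A (widen_ord (leqnSn n) i) ord_max.
have rowE' : forall j, (p *m (\matrix_(i < n, j < m) (A (widen_ord (leqnSn n) i) (widen_ord (leqnSn m) j)
   + e * A (widen_ord (leqnSn n) i) ord_max * A ord_max (widen_ord (leqnSn m) j))) +
   (\row_(j < m) (b0 0 (widen_ord (leqnSn m) j)
   + e * b0 0 ord_max * A ord_max (widen_ord (leqnSn m) j)))) 0 j =
   \sum_(i < n) p 0 i * A (widen_ord (leqnSn n) i) (widen_ord (leqnSn m) j)
   + e * A ord_max (widen_ord (leqnSn m) j) * Pm
   + (b0 0 (widen_ord (leqnSn m) j) + e * b0 0 ord_max * A ord_max (widen_ord (leqnSn m) j)).
  move=> j; rewrite mxE [(_ *m _) 0 j]mxE [(\row_j0 _) 0 j]mxE.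
  congr (_ + _).
  rewrite /Pm mulr_sumr -big_split /=; apply: eq_bigr => i _.
  by rewrite mxE tr_alg4.
split.
  move=> [t [w [/hc H ht]]].
  have Em := congr1 (fun r : 'rV[K]_m.+1 => r 0 ord_max) H; rewrite /= ext_max extmul in Em.
  have Ht := tr_alg _ _ _ _ _ _ _ hd ht Em.
  apply/rowP => j; rewrite rowE'.
  have Ej := congr1 (fun r : 'rV[K]_m.+1 => r 0 (widen_ord (leqnSn m) j)) H.
  rewrite /= ext_w extmul in Ej.
  by rewrite Ej Ht tr_alg2.
move=> Hq.
exists (xK k * ((Pm + b0 0 ord_max) / d)), ((Pm + b0 0 ord_max) / d); split; last by [].
apply/hc; apply/rowP => j; rewrite extmul.
case: (unliftP ord_max j) => [j'|] ->.
  by rewrite lift_max' ext_w Hq rowE' tr_alg5.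
rewrite ext_max -/Pm; exact: (tr_alg3 _ _ _ _ _ hd).
Qed.

Lemma soundness n m (c : circ k n m) : ASF c -> AffG c.
Proof.
elim=> {n m c}.
- exact: sound_Copy.
- exact: sound_Disc.
- exact: sound_Amp.
- exact: sound_Reg.
- exact: sound_Add.
- exact: sound_Zero.
- exact: sound_One.
- exact: sound_Id0.
- exact: sound_Id1.
- exact: sound_Sw.
- by move=> n m l c1 c2 _ h1 _ h2; apply: sound_Seq.
- by move=> n1 m1 n2 m2 c1 c2 _ h1 _ h2; apply: sound_Par.
by move=> n m c _ h; apply: sound_Tr.
Qed.

End Sound.
End SM.
Import SM.

Module CM.

Section Comp.
Variable k : fieldType.
Local Notation K := (kx k).

Lemma rget_lsub' n1 n2 (r : 'rV[K]_(n1 + n2)) i :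
  rget (lsubmx r) i = if (i < n1)%N then rget r i else 0.
Proof. by case: ifP => h; [rewrite rget_lsub | rewrite rget_ge // leqNgt h]. Qed.

Lemma sum2 (r : 'rV[K]_2) : \sum_(i < 2) r 0 i = rget r 0 + rget r 1.
Proof. by rewrite big_ord_recr big_ord1 -!rgetE. Qed.

Ltac sif := rewrite ?addRN ?two_nat; repeat (case: ifP => ?); try (by exfalso; lia); try done.

Ltac sif0 := rewrite ?addRN ?two_nat; repeat (case: ifP => ?); try (by exfalso; lia).

Ltac rg := rewrite ?(rget_cast, rget_rsub, rget_lsub', rget_mkrow, rget_row_mx, rget_add,
   (@rget_row_mx _ 1 1), (@rget_lsub' 1 1), (@rget_rsub _ 1 1),
   rget_scale, rget_const, rget0, rget_sw, cmxE, sum2) /=.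

Lemma ASF_castc n m n' m' (e1 : n = n') (e2 : m = m') (c : circ k n m) :
  ASF c -> ASF (castc e1 e2 c).
Proof. by case: n' / e1; case: m' / e2. Qed.

Lemma ASF_idn n : ASF (idn k n).
Proof. elim: n => [|n IH]; first exact: ASF_Id0. by apply: ASF_castc; apply: ASF_Par; [exact: IH | exact: ASF_Id1]. Qed.

Ltac asf := repeat (match goal with
  | |- ASF (Seq ?a ?b) => apply: (@ASF_Seq _ _ _ _ a b)
  | |- ASF (Par ?a ?b) => apply: (@ASF_Par _ _ _ _ _ a b)
  | |- ASF (Tr ?a) => apply: (@ASF_Tr _ _ _ a)
  | |- ASF (castc ?e1 ?e2 ?a) => apply: (ASF_castc e1 e2)
  | |- ASF (idn _ _) => apply: ASF_idn
  | |- _ => first [assumption | constructor]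
  end).

Lemma GF_Copy : GF (@Copy k) (fun a => const_mx (a 0 0)).
Proof. by move=> a b; exact: iff_refl. Qed.
Lemma GF_Disc : GF (@Disc k) (fun _ => 0).
Proof. by move=> a b; split => _; [apply: rV0_eq|]. Qed.
Lemma GF_Reg : GF (@Reg k) (fun a => xK k *: a).
Proof. by move=> a b; exact: iff_refl. Qed.
Lemma GF_Amp r : GF (@Amp k r) (fun a => kscal r *: a).
Proof. by move=> a b; exact: iff_refl. Qed.
Lemma GF_Add : GF (@Add k) (fun a => const_mx (\sum_i a 0 i)).
Proof. by move=> a b; exact: iff_refl. Qed.
Lemma GF_One : GF (@One k) (fun _ => const_mx 1).
Proof. by move=> a b; exact: iff_refl. Qed.
Lemma GF_Id1 : GF (@Id1 k) (fun a => a).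
Proof. by move=> a b; split => ->. Qed.
Lemma GF_Sw : GF (@Sw k) (fun a => \row_i a 0 (rev_ord i)).
Proof. by move=> a b; exact: iff_refl. Qed.

Lemma poly_circ (p : {poly k}) :
  exists d : circ k 1 1, ASF d /\ GF d (fun a => fracp p *: a).
Proof.
elim/poly_ind: p => [|p c [d [hd gd]]].
  exists (Amp 0); split; first by constructor.
  apply: GF_ext (GF_Amp 0) _ => a.
  by rewrite /kscal polyC0.
exists (Seq Copy (Seq (Par (Seq d Reg) (Amp c)) Add)); split; first by asf.
apply: GF_ext (GF_Seq GF_Copy (GF_Seq (GF_Par (GF_Seq gd GF_Reg) (GF_Amp c)) GF_Add)) _ => a.
apply: rowE => i hi; rg; have -> : i = 0%N by lia.
rewrite /= rget1 /xK /kscal /fracp tofracD tofracM.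
exact: poly_alg.
Qed.


Lemma kscalN (c : k) : kscal (- c) = - kscal c.
Proof. by rewrite /kscal polyCN /fracp tofracN. Qed.

Lemma kscalV (c : k) : c != 0 -> kscal c^-1 * kscal c = 1.
Proof. by move=> hc; rewrite /kscal /fracp -tofracM -polyCM (mulVf hc) tofrac1. Qed.

Lemma inv_circ (q : {poly k}) : q.[0] != 0 ->
  exists d : circ k 1 1, ASF d /\ GF d (fun a => (fracp q)^-1 *: a).
Proof.
elim/poly_ind: q => [|q c _] hq.
  by rewrite horner0 eqxx in hq.
have hc : c != 0 by move: hq; rewrite hornerD hornerMX hornerC mulr0 add0r.
have [dq [hdq gdq]] := poly_circ q.
have g0 := GF_Seq (GF_Par (GF_Amp c^-1) (GF_Amp (- c^-1)))
   (GF_Seq GF_Add (GF_Seq GF_Copy (GF_Par GF_Id1 gdq))).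
exists (Tr (Seq (Par (Amp c^-1) (Amp (- c^-1))) (Seq Add (Seq Copy (Par Id1 dq))) : circ k 2 2)).
split; first by asf.
have hQ : fracp (q * 'X + c%:P) = fracp q * xK k + kscal c.
  by rewrite /fracp tofracD tofracM.
have hQ0 := fracp_neq0 hq.
move=> a b; rewrite sem_Tr; split.
  move=> [t [w [/g0 H ht]]].
  move: (congr1 (fun r => rget r 0) H) (congr1 (fun r => rget r 1) H) => /=; rg.
  rewrite kscalN => H0 H1; rewrite -H0 in H1.
  have hQ0' : fracp q * xK k + kscal c != 0 by rewrite -hQ.
  apply: rowE => i hi; have -> : i = 0%N by lia.
  rg; rewrite hQ; apply: (inv_alg1 _ _ _ _ _ _ _ (kscalV hc) hQ0').
  by rewrite {1}H0 ht H1.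
move=> Hb.
have hQ0' : fracp q * xK k + kscal c != 0 by rewrite -hQ.
have hy : rget b 0 = kscal c^-1 * rget a 0 + - kscal c^-1 * (xK k * (fracp q * rget b 0)).
  rewrite Hb rget_scale hQ; exact: (inv_alg2 _ _ _ _ _ _ (kscalV hc) hQ0').
exists (xK k * (fracp q * rget b 0)), (fracp q * rget b 0); split; last by [].
apply/g0; apply: rowE => i hi; rg; rewrite kscalN -hy.
sif0; try (have -> : i = 0%N by lia); by [].
Qed.


Lemma rat_circ (r : K) : is_Rat r -> exists d : circ k 1 1, ASF d /\ GF d (fun a => r *: a).
Proof.
move=> [p [q [hq ->]]].
have [dp [hp gp]] := poly_circ p; have [di [hi gi]] := inv_circ hq.
exists (Seq dp di); split; first by asf.
apply: GF_ext (GF_Seq gp gi) _ => a; rewrite scalerA; congr (_ *: _); exact: mulrC.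
Qed.

Lemma disc_circ a : exists d : circ k a 0, ASF d /\ GF d (fun _ => 0).
Proof.
elim: a => [|a [d [hd gd]]].
  exists Id0; split; first by constructor.
  by move=> x y; split => _; [apply: rV0_eq|].
exists (castc (addn1 a) (erefl 0%N) (Par d Disc)); split; first by asf.
apply: GF_ext (GF_cast (addn1 a) (erefl 0%N) (GF_Par gd GF_Disc)) _ => x; apply: rV0_eq.
Qed.

Ltac fin := match goal with
  | |- rget ?u ?x = rget ?u ?y => have -> : x = y by lia
  end.

Lemma cross_circ a : exists d : circ k (a + 1) (1 + a), ASF d /\
  GF d (fun u => mkrow (1 + a) (fun i => if i == 0%N then rget u a else rget u i.-1)).
Proof.
elim: a => [|a [d [hd gd]]].
  exists Id1; split; first by constructor.
  apply: GF_ext GF_Id1 _ => u; apply: rowE => i hi; rg; have -> : i = 0%N by lia.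
  by [].
exists (Seq (castc (esym (addSn a 1)) (erefl (1 + (1 + a))%N) (Par Id1 d)) (Par Sw (idn k a))).
split; first by asf.
have g1 := GF_cast (esym (addSn a 1)) (erefl (1 + (1 + a))%N) (GF_Par GF_Id1 gd).
have g2 := GF_Par GF_Sw (@GF_idn k a).
have g := GF_Seq g1 g2.
apply: GF_ext g _ => u.
apply: rowE => i hi; rg.
sif0.
all: try fin.
all: try by [].
Qed.


Lemma copy_circ a : exists d : circ k a (a + a), ASF d /\ GF d (fun p => row_mx p p).
Proof.
elim: a => [|a [d [hd gd]]].
  exists Id0; split; first by constructor.
  by move=> x y; split => _; [apply: rV0_eq|].
have [dc [hdc gdc]] := cross_circ a.
have e1 : ((a + a) + 2 = a + ((a + 1) + 1))%N by lia.
have e2 : (a + ((1 + a) + 1) = a.+1 + a.+1)%N by lia.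
exists (Seq (castc (addn1 a) e1 (Par d Copy)) (castc (erefl (a + ((a + 1) + 1))%N) e2 (Par (idn k a) (Par dc Id1)))).
split; first by asf.
have g1 := GF_cast (addn1 a) e1 (GF_Par gd GF_Copy).
have g2 := GF_cast (erefl (a + ((a + 1) + 1))%N) e2 (GF_Par (@GF_idn k a) (GF_Par gdc GF_Id1)).
apply: GF_ext (GF_Seq g1 g2) _ => p.
apply: rowE => i hi; rg; rewrite ?rget1; rg.
sif0.
all: try fin.
all: try by [].
Qed.


Lemma col_circ a (g : nat -> K) (bt : K) : (forall i, is_Rat (g i)) -> is_Rat bt ->
  exists d : circ k a 1, ASF d /\ GF d (fun p => const_mx (\sum_(i < a) p 0 i * g i + bt)).
Proof.
move=> hg hbt; elim: a => [|a [d [hd gd]]].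
  have [db [hdb gdb]] := rat_circ hbt.
  exists (Seq One db); split; first by asf.
  apply: GF_ext (GF_Seq GF_One gdb) _ => p; apply: rowE => i hi; rg.
  by rewrite hi big_ord0 add0r mulr1.
have [dg [hdg gdg]] := rat_circ (hg a).
exists (castc (addn1 a) (erefl 1%N) (Seq (Par d dg) Add)); split; first by asf.
apply: GF_ext (GF_cast (addn1 a) (erefl 1%N) (GF_Seq (GF_Par gd gdg) GF_Add)) _ => p.
apply: rowE => i hi; rg; rewrite hi.
rewrite big_ord_recr /= -[p 0 ord_max]rgetE /= addn0.
apply: col_alg; apply: eq_bigr => j _.
rewrite -[lsubmx _ 0 j]rgetE -[p 0 _]rgetE; rg; rewrite (ltn_ord j).
by [].
Qed.

Lemma lin_circ a b (G : nat -> nat -> K) (bt : nat -> K) :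
  (forall i j, is_Rat (G i j)) -> (forall j, is_Rat (bt j)) ->
  exists d : circ k a b, ASF d /\
    GF d (fun p => mkrow b (fun j => \sum_(i < a) p 0 i * G i j + bt j)).
Proof.
move=> hG hb; elim: b => [|b [d [hd gd]]].
  have [dd [hdd gdd]] := disc_circ a.
  exists dd; split; first exact: hdd.
  apply: GF_ext gdd _ => p; apply: rV0_eq.
have [dc [hdc gdc]] := copy_circ a.
have [dl [hdl gdl]] := @col_circ a (fun i => G i b) (bt b) (fun i => hG i b) (hb b).
exists (Seq dc (castc (erefl (a + a)%N) (addn1 b) (Par d dl))); split; first by asf.
apply: GF_ext (GF_Seq gdc (GF_cast (erefl (a + a)%N) (addn1 b) (GF_Par gd gdl))) _ => p.
rewrite row_mxKl row_mxKr.
apply: rowE => j hj; rg.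
sif0.
all: try (have -> : j = b by lia).
all: try by [].
Qed.


Definition mget a b (A : 'M[K]_(a, b)) (i j : nat) : K :=
  if (insub i : option 'I_a) is Some i' then
    (if (insub j : option 'I_b) is Some j' then A i' j' else 0) else 0.

Lemma mgetE a b (A : 'M[K]_(a, b)) (i : 'I_a) (j : 'I_b) : mget A i j = A i j.
Proof. by rewrite /mget !valK. Qed.

Lemma completeness a b (f : 'rV[K]_a -> 'rV[K]_b) :
  rational_affine f -> exists d : circ k a b, ASF d /\ GF d f.
Proof.
move=> [A [b0 [hA [hb hf]]]].
have hG : forall i j, is_Rat (mget A i j).
  move=> i j; rewrite /mget; case: insub => [i'|]; last exact: Rat0.
  case: insub => [j'|]; [exact: hA | exact: Rat0].
have hB : forall j, is_Rat (rget b0 j).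
  move=> j; case: (ltnP j b) => h.
    by rewrite -[j]/(val (Ordinal h)) rgetE; exact: hb.
  by rewrite rget_ge //; exact: Rat0.
have [d [hd gd]] := @lin_circ a b (mget A) (rget b0) hG hB.
exists d; split; first exact: hd.
apply: GF_ext gd _ => p; rewrite hf; apply: rowE => j hj; rg; rewrite hj.
rewrite -[j]/(val (Ordinal hj)) [rget (_ *m _) _]rgetE mxE.
congr (_ + _); apply: eq_bigr => i _; rewrite mgetE.
by [].
Qed.

End Comp.
End CM.
Import CM.

Theorem theorem5 (k : fieldType) (n m : nat) (c : circ k n m) :
  realisable c <->
  exists (S : {set 'I_n + 'I_m}) (f : 'rV[kx k]_#|S| -> 'rV[kx k]_#|~: S|),
    rational_affine f /\ is_graph_of (rewiring c S) f.
Proof.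
split.
  move=> [S [d [hd he]]].
  have [A [b0 [hA [hb gd]]]] := soundness hd.
  exists S, (fun p => p *m A + b0); split.
    exists A, b0; split; first exact: hA.
    split; first exact: hb.
    by move=> p.
  move=> p q; split => h.
    by apply/gd; apply/he; exact: h.
  by apply/he; apply/gd; exact: h.
move=> [S [f [hf hg]]].
have [d [hd gd]] := completeness hf.
exists S, d; split; first exact: hd.
move=> a b; split => h.
  by apply/hg; apply/gd; exact: h.
by apply/gd; apply/hg; exact: h.
Qed.
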